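(* Let $\mathbf{x}\in\Delta^0$. Then: (1) for every $\tilde{\mathbf{x}}\in\mathcal{P}(\mathbf{x})\cap\Delta^0$ we have $f(\tilde{\mathbf{x}})=f(\mathbf{x})$; (2) for every nonzero $\mathbf{d}\in\mathbb{R}^n$ such that $\mathbf{x}+t\mathbf{d}\in\Delta^0$ for all sufficiently small $t>0$, we have $\mathbf{d}^{\mathsf T}\nabla^2 f(\mathbf{x})\mathbf{d}<0$.
   Context: Let $G=(\mathcal{V},\mathcal{E})$ be a simple undirected graph on vertex set $\mathcal{V}=\{1,\dots,n\}$ with adjacency matrix $\mathbf{A}=(a_{ij})$ ($a_{ij}=1$ if $(i,j)\in\mathcal{E}$, else $0$; $a_{ii}=0$). A clique is a subset $C\subseteq\mathcal{V}$ with $(i,j)\in\mathcal{E}$ for all distinct $i,j\in C$. Let $\Delta=\{\mathbf{x}\in\mathbb{R}^n:\mathbf{0}\le\mathbf{x}\le\mathbf{1},\ \mathbf{1}^{\mathsf T}\mathbf{x}=1\}$. For $\mathbf{x}\in\mathbb{R}^n$, $\mathrm{supp}(\mathbf{x})=\{i:x_i\neq0\}$. Let $\Delta^0=\{\mathbf{x}\in\Delta:\mathrm{supp}(\mathbf{x})\text{ is a clique}\}$. For $\mathbf{x}\in\Delta$, $\mathcal{P}(\mathbf{x})=\{\tilde{\mathbf{x}}\in\Delta:\exists$ a permutation $\sigma$ of $\{1,\dots,n\}$ with $\tilde x_i=x_{\sigma(i)}$ for all $i\}$. Let $\Phi:X\to\mathbb{R}$ be twice continuously differentiable on an open set $X\supset\Delta$,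 satisfying for every $\mathbf{x}\in\Delta$: (C1) $\nabla^2\Phi(\mathbf{x})$ is positive semidefinite; (C2) $\|\nabla^2\Phi(\mathbf{x})\|_2<2$ (spectral norm); (C3) $\Phi$ is constant on $\mathcal{P}(\mathbf{x})$. Define $f(\mathbf{x})=\mathbf{x}^{\mathsf T}\mathbf{A}\mathbf{x}+\Phi(\mathbf{x})$. *)

(* Defs.v *)
(* Vectors of R^n are row vectors 'rV[R]_n,
   vertices {1..n} are 'I_n (0-based). *)
From HB Require Import structures.
From mathcomp Require Import all_boot all_order all_algebra all_fingroup.
From mathcomp Require Import all_classical all_reals all_analysis.
Set Implicit Arguments. Unset Strict Implicit. Unset Printing Implicit Defensive.
Import Order.TTheory GRing.Theory Num.Theory.
Import numFieldNormedType.Exports.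
Local Open Scope classical_set_scope.
Local Open Scope ring_scope.

Section Defs.
Variables (R : realType) (n : nat).

Definition simple_graph (e : rel 'I_n) : Prop :=
  (forall i j, e i j = e j i) /\ (forall i, ~~ e i i).

Definition adjmx (e : rel 'I_n) : 'M[R]_n := \matrix_(i, j) (e i j)%:R.

Definition is_clique (e : rel 'I_n) (C : {set 'I_n}) : Prop :=
  forall i j, i \in C -> j \in C -> i != j -> e i j.

Definition supp (x : 'rV[R]_n) : {set 'I_n} := [set i | x 0 i != 0].

Definition simplex : set 'rV[R]_n :=
  [set x | (forall i, 0 <= x 0 i <= 1) /\ \sum_i x 0 i = 1].

Definition simplex0 (e : rel 'I_n) : set 'rV[R]_n :=
  [set x | simplex x /\ is_clique e (supp x)].

Definition perm_orbit (x : 'rV[R]_n) : set 'rV[R]_n :=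
  [set xt | simplex xt /\ exists s : 'S_n, forall i, xt 0 i = x 0 (s i)].

Definition unitv (i : 'I_n) : 'rV[R]_n := \row_j (i == j)%:R.

Definition partial (g : 'rV[R]_n -> R) (i : 'I_n) : 'rV[R]_n -> R :=
  fun y => derive g y (unitv i).

Definition hessian (g : 'rV[R]_n -> R) (x : 'rV[R]_n) : 'M[R]_n :=
  \matrix_(i, j) partial (partial g i) j x.

Definition C2_on (X : set 'rV[R]_n) (g : 'rV[R]_n -> R) : Prop :=
  open X /\
  (forall x, X x -> {for x, continuous g}) /\
  (forall i x, X x -> derivable g x (unitv i)) /\
  (forall i x, X x -> {for x, continuous (partial g i)}) /\
  (forall i j x, X x -> derivable (partial g i) x (unitv j)) /\
  (forall i j x, X x -> {for x, continuous (partial (partial g i) j)}).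

Definition qform (M : 'M[R]_n) (v : 'rV[R]_n) : R := (v *m M *m v^T) 0 0.

Definition psd (M : 'M[R]_n) : Prop := forall v, 0 <= qform M v.

Definition euclid_norm (v : 'rV[R]_n) : R := Num.sqrt (\sum_i v 0 i ^+ 2).

Definition spectral_norm (M : 'M[R]_n) : R :=
  sup [set euclid_norm (v *m M^T) | v in [set v | euclid_norm v = 1]].

End Defs.

(* Main.v *)
Require Import Defs.
From HB Require Import structures.
From mathcomp Require Import all_boot all_order all_algebra all_fingroup.
From mathcomp Require Import all_classical all_reals all_analysis.
From mathcomp Require Import ring lra.
Import Order.TTheory GRing.Theory Num.Theory.
Import numFieldNormedType.Exports.
Local Open Scope classical_set_scope.
Local Open Scope ring_scope.
Set Implicit Arguments. Unset Strict Implicit. Unset Printing Implicit Defensive.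
Section Alg.
Variables (R : realType) (n : nat).
Implicit Types (M : 'M[R]_n) (a b y v w z : 'rV[R]_n).

Definition bil M a b : R := (a *m M *m b^T) 0 0.

Lemma bilE M a b : bil M a b = \sum_i \sum_j a 0 i * M i j * b 0 j.
Proof.
rewrite /bil mxE exchange_big /=; apply: eq_bigr => j _.
rewrite !mxE big_distrl /=; apply: eq_bigr => i _. by [].
Qed.

Lemma bilDl M (h : R) w y z : bil M (h *: w + y) z = h * bil M w z + bil M y z.
Proof.
rewrite !bilE mulr_sumr -big_split /=; apply: eq_bigr => i _.
rewrite mulr_sumr -big_split /=; apply: eq_bigr => j _; rewrite !mxE; ring.
Qed.

Lemma bilDr M (h : R) w y z : bil M z (h *: w + y) = h * bil M z w + bil M z y.
Proof.
rewrite !bilE mulr_sumr -big_split /=; apply: eq_bigr => i _.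
rewrite mulr_sumr -big_split /=; apply: eq_bigr => j _; rewrite !mxE; ring.
Qed.

Lemma bilMD M N a b : bil (M + N) a b = bil M a b + bil N a b.
Proof.
rewrite !bilE -big_split /=; apply: eq_bigr => i _.
rewrite -big_split /=; apply: eq_bigr => j _; rewrite !mxE; ring.
Qed.

Lemma bil_unit M i j : bil M (unitv R i) (unitv R j) = M i j.
Proof.
rewrite bilE (bigD1 i) //= [X in _ + X]big1 => [|k ki]; last first.
  apply: big1 => l _; rewrite !mxE eq_sym (negbTE ki) /=; ring.
rewrite addr0 (bigD1 j) //= [X in _ + X]big1 => [|k kj]; last first.
  rewrite !mxE eqxx [j == k]eq_sym (negbTE kj) /=; ring.
rewrite !mxE !eqxx /=; ring.
Qed.

Lemma qformE M v : qform M v = bil M v v.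
Proof. by []. Qed.

Lemma qform_shift M (h : R) v y :
  qform M (h *: v + y) - qform M y = h * (bil M v y + bil M y v) + h ^+ 2 * qform M v.
Proof. rewrite !qformE bilDl !bilDr; ring. Qed.

Lemma bil_trmx M a b : bil M a b = bil M^T b a.
Proof.
rewrite !bilE exchange_big /=; apply: eq_bigr => i _; apply: eq_bigr => j _.
rewrite !mxE; ring.
Qed.

End Alg.

Lemma quad_derive (R : realType) n (f : 'rV[R]_n -> R) a v (c k : R) :
 (forall h : R, f (h *: v + a) - f a = h * c + h^+2 * k) ->
 derivable f a v /\ derive f a v = c.
Proof.
move=> H.
have L : (fun h : R => h^-1 *: ((f \o shift a) (h *: v) - f a)) @ 0^' --> c.
  have E : {near 0^', (fun h : R => c + h * k) =1 (fun h : R => h^-1 *: ((f \o shift a) (h *: v) - f a))}.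
    near=> h => /=. rewrite H.
    have h0 : h != 0 by near: h; exact: nbhs_dnbhs_neq.
    rewrite /GRing.scale /= mulrDr mulrA mulVf // mul1r expr2 !mulrA mulVf // mul1r //.
  apply: cvg_trans; first exact: (near_eq_cvg E).
  have C0 : (fun h : R => c + h * k) @ 0 --> c + 0 * k.
    apply: cvgD; first exact: cvg_cst.
    apply: cvgMl. exact: cvg_id.
  rewrite mul0r addr0 in C0.
  exact: (cvg_trans (cvg_app _ (cvg_within _)) C0).
split; first by apply/cvg_ex; exists c.
exact: cvg_lim.
Unshelve. all: by end_near.
Qed.

Section Der.
Variables (R : realType) (n : nat).
Implicit Types (M : 'M[R]_n) (a b y v w z : 'rV[R]_n).

Lemma der_qform M i y :
  derivable (qform M) y (unitv R i) /\
  partial (qform M) i y = bil M (unitv R i) y + bil M y (unitv R i).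
Proof. have [H1 H2] := @quad_derive R n (qform M) y (unitv R i)
  (bil M (unitv R i) y + bil M y (unitv R i)) (qform M (unitv R i))
  (fun h => qform_shift M h (unitv R i) y).
by split. Qed.

Lemma partial_qform M i :
  partial (qform M) i = fun y => bil M (unitv R i) y + bil M y (unitv R i).
Proof. by apply: funext => y; case: (der_qform M i y). Qed.

Lemma der_lin M u j x :
  derivable (fun y => bil M u y + bil M y u) x (unitv R j) /\
  derive (fun y => bil M u y + bil M y u) x (unitv R j) =
     bil M u (unitv R j) + bil M (unitv R j) u.
Proof.
apply: (@quad_derive R n _ x (unitv R j) _ 0) => h.
rewrite bilDr bilDl; ring.
Qed.

Lemma hess_sum M (Phi : 'rV[R]_n -> R) (X : set 'rV[R]_n) x :
  open X -> X x ->
  (forall i y, X y -> derivable Phi y (unitv R i)) ->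
  (forall i j, derivable (partial Phi i) x (unitv R j)) ->
  hessian (fun y => qform M y + Phi y) x = (M + M^T) + hessian Phi x.
Proof.
move=> oX Xx dPhi d2Phi.
apply/matrixP => i j; rewrite !mxE.
have NX : \forall y \near x, X y by exact: (open_nbhs_nbhs (conj oX Xx)).
have E : \forall y \near x, partial (fun y => qform M y + Phi y) i y =
            (partial (qform M) i + partial Phi i) y.
  near=> y.
  have Xy : X y by near: y.
  rewrite /partial /=.
  exact: (deriveD (proj1 (der_qform M i y)) (dPhi i y Xy)).
rewrite /partial (near_eq_derive _ E).
rewrite deriveD; last 2 first.
- by rewrite partial_qform; case: (der_lin M (unitv R i) j x).
- exact: d2Phi.
rewrite partial_qform; case: (der_lin M (unitv R i) j x) => _ ->.
by rewrite !bil_unit.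
Unshelve. all: by end_near.
Qed.

End Der.
Section Norms.
Variables (R : realType) (n : nat).
Implicit Types (M : 'M[R]_n) (a b y v w z : 'rV[R]_n).

Lemma sumsq_ge0 a : 0 <= \sum_i a 0 i ^+ 2.
Proof. by apply: sumr_ge0 => i _; exact: sqr_ge0. Qed.

Lemma euclid_sq a : euclid_norm a ^+ 2 = \sum_i a 0 i ^+ 2.
Proof. by rewrite /euclid_norm sqr_sqrtr // sumsq_ge0. Qed.

Lemma cs a b : \sum_i b 0 i ^+ 2 = 1 -> \sum_i a 0 i * b 0 i <= euclid_norm a.
Proof.
move=> hb.
set s := euclid_norm a; set P := \sum_i a 0 i * b 0 i.
have s2 := euclid_sq a; rewrite -/s in s2.
have s0 : 0 <= s by exact: sqrtr_ge0.
have E : \sum_i (a 0 i - s * b 0 i) ^+ 2 =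
   \sum_i a 0 i ^+ 2 - (2 * s) * P + s ^+ 2 * \sum_i b 0 i ^+ 2.
  rewrite /P !mulr_sumr -sumrB -big_split /=.
  by apply: eq_bigr => i _; ring.
have : 0 <= \sum_i (a 0 i - s * b 0 i) ^+ 2 by apply: sumr_ge0 => i _; exact: sqr_ge0.
rewrite E hb -s2 mulr1 => H.
have [sp|] := ltP 0 s; first by nra.
move=> sle; have s00 : s = 0 by lra.
have a0 : forall i, a 0 i = 0.
  move=> i; apply/eqP; rewrite -sqrf_eq0; apply/eqP.
  apply: (@psumr_eq0P _ _ xpredT (fun i => a 0 i ^+ 2)) => //.
    by move=> j _; exact: sqr_ge0.
  by rewrite -s2 s00 expr0n.
rewrite /P big1 ?s00 // => i _; by rewrite a0 mul0r.
Qed.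

Lemma euclid1 v : euclid_norm v = 1 -> \sum_i v 0 i ^+ 2 = 1.
Proof. by move=> h; rewrite -euclid_sq h expr1n. Qed.

Lemma spec_ub M :
  has_ubound [set euclid_norm (v *m M^T) | v in [set v | euclid_norm v = 1]].
Proof.
pose B := fun j => \sum_k `|M j k|.
exists (Num.sqrt (\sum_j B j ^+ 2)) => _ [v /= /euclid1 hv <-].
apply: ler_wsqrtr; apply: ler_sum => j _.
have vk : forall k, `|v 0 k| <= 1.
  move=> k; have : v 0 k ^+ 2 <= 1.
    rewrite -hv (bigD1 k) //= lerDl; apply: sumr_ge0 => i _; exact: sqr_ge0.
  rewrite -real_normK ?num_real // => h.
  have := normr_ge0 (v 0 k); nra.
have uj : `|(v *m M^T) 0 j| <= B j.
  rewrite mxE; apply: le_trans (ler_norm_sum _ _ _) _.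
  apply: ler_sum => k _; rewrite !mxE normrM.
  have := normr_ge0 (M j k); have := vk k; have := normr_ge0 (v 0 k); nra.
rewrite -real_normK ?num_real //.
have := normr_ge0 ((v *m M^T) 0 j); nra.
Qed.

Lemma le_spec M v : euclid_norm v = 1 -> euclid_norm (v *m M^T) <= spectral_norm M.
Proof. move=> hv; apply: (ub_le_sup (spec_ub M)); by exists v. Qed.

End Norms.
Section Graph.
Variables (R : realType) (n : nat) (e : rel 'I_n).

Lemma adj_tr : simple_graph e -> (adjmx R e)^T = adjmx R e.
Proof. by move=> [es _]; apply/matrixP => i j; rewrite !mxE es. Qed.

Lemma qform_clique (y : 'rV[R]_n) : simple_graph e -> is_clique e (supp y) ->
  qform (adjmx R e) y = (\sum_i y 0 i) ^+ 2 - \sum_i y 0 i ^+ 2.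
Proof.
move=> [es eirr] cl.
rewrite qformE bilE.
have H : forall i, \sum_j y 0 i * adjmx R e i j * y 0 j =
                   y 0 i * \sum_j y 0 j - y 0 i ^+ 2.
  move=> i.
  have [yi0|yi0] := eqVneq (y 0 i) 0.
    by rewrite yi0 big1 => [|j _]; rewrite ?mul0r ?expr0n /=; ring.
  rewrite mulr_sumr (bigD1 i) //= [X in _ = X - _](bigD1 i) //=.
  rewrite !mxE (negbTE (eirr i)) /= mulr0 mul0r add0r expr2 addrC addrK.
  apply: eq_bigr => j ji; rewrite mxE.
  have [yj0|yj0] := eqVneq (y 0 j) 0; first by rewrite yj0 !mulr0.
  have -> : e i j.
    by apply: cl; rewrite ?inE // eq_sym.
  by rewrite /= mulr1.
rewrite (eq_bigr _ (fun i _ => H i)) sumrB -mulr_suml expr2 //.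
Qed.

End Graph.

Lemma two_zero (R : realType) (a b t t' : R) :
  b != 0 -> a + t * b = 0 -> a + t' * b = 0 -> t = t'.
Proof.
move=> b0 h1 h2.
have : (t - t') * b = 0 by lra.
move/eqP; rewrite mulf_eq0 (negbTE b0) orbF subr_eq0 => /eqP //.
Qed.

Lemma bilZ (R : realType) n (M : 'M[R]_n) (c : R) v :
  bil M (c *: v) (c *: v) = c ^+ 2 * bil M v v.
Proof.
rewrite !bilE mulr_sumr; apply: eq_bigr => i _.
rewrite mulr_sumr; apply: eq_bigr => j _; rewrite !mxE; ring.
Qed.

Lemma bil_row (R : realType) n (M : 'M[R]_n) a b :
  bil M a b = \sum_j (a *m M) 0 j * b 0 j.
Proof. rewrite /bil mxE; apply: eq_bigr => j _. by rewrite [b^T _ _]mxE. Qed.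

Theorem lemma1 (R : realType) (n : nat) (e : rel 'I_n)
  (X : set 'rV[R]_n) (Phi : 'rV[R]_n -> R) :
  simple_graph e ->
  @simplex R n `<=` X ->
  C2_on X Phi ->
  (forall x, @simplex R n x -> psd (hessian Phi x)) ->
  (forall x, @simplex R n x -> spectral_norm (hessian Phi x) < 2) ->
  (forall x xt, @simplex R n x -> perm_orbit x xt -> Phi xt = Phi x) ->
  let f := fun x : 'rV[R]_n => qform (@adjmx R n e) x + Phi x in
  forall x, simplex0 e x ->
    (forall xt, perm_orbit x xt -> simplex0 e xt -> f xt = f x) /\
    (forall d : 'rV[R]_n, d != 0 ->
       (exists eps : R, 0 < eps /\
          forall t : R, 0 < t < eps -> simplex0 e (x + t *: d)) ->
       qform (hessian f x) d < 0).
Proof.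
move=> sg sX C2 _ specH permH f x [sx clx].
have [oX [_ [dPhi [_ [d2Phi _]]]]] := C2.
split.
  move=> xt oxt [sxt clxt].
  have Pe := permH x xt sx oxt.
  have [_ [s hs]] := oxt.
  rewrite /f Pe !qform_clique // (proj2 sx) (proj2 sxt).
  have -> : \sum_i xt 0 i ^+ 2 = \sum_i x 0 i ^+ 2.
    rewrite [RHS](reindex_inj (@perm_inj _ s)); apply: eq_bigr => i _.
    by rewrite hs.
  by [].
move=> d d0 [eps [eps0 hd]].
have Xx : X x := sX x sx.
rewrite /f (hess_sum _ oX Xx); last first.
- by move=> i j; apply: d2Phi.
- by move=> i y Xy; apply: dPhi.
rewrite qformE !bilMD adj_tr //.
set H := hessian Phi x.
have t1p : 0 < eps / 2 by lra.
have sd : \sum_i d 0 i = 0.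
  have [[_ s1] _] := hd (eps / 2) (ltac:(apply/andP; split; lra)).
  move: s1; under eq_bigr => i _ do rewrite !mxE.
  rewrite big_split /= -mulr_sumr (proj2 sx) => h.
  have : eps / 2 * \sum_i d 0 i = 0 by lra.
  by move/eqP; rewrite mulf_eq0 (gt_eqF t1p) /= => /eqP.
have cd : is_clique e (supp d).
  move=> i j; rewrite !inE => di dj ij.
  have key : forall t, 0 < t < eps -> x 0 i + t * d 0 i != 0 ->
      x 0 j + t * d 0 j != 0 -> e i j.
    move=> t ht hi hj; have [_ cl] := hd t ht.
    by apply: cl => //; rewrite inE !mxE.
  have h1 : 0 < eps / 2 < eps by apply/andP; split; lra.
  have h2 : 0 < eps / 3 < eps by apply/andP; split; lra.
  have h3 : 0 < eps / 4 < eps by apply/andP; split; lra.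
  have [a1|a1] := eqVneq (x 0 i + eps / 2 * d 0 i) 0.
    have a2 : x 0 i + eps / 3 * d 0 i != 0.
      by apply/eqP => h; have := two_zero di a1 h; lra.
    have a3 : x 0 i + eps / 4 * d 0 i != 0.
      by apply/eqP => h; have := two_zero di a1 h; lra.
    have [b2|b2] := eqVneq (x 0 j + eps / 3 * d 0 j) 0; last exact: (key _ h2).
    have b3 : x 0 j + eps / 4 * d 0 j != 0.
      by apply/eqP => h; have := two_zero dj b2 h; lra.
    exact: (key _ h3).
  have [b1|b1] := eqVneq (x 0 j + eps / 2 * d 0 j) 0; last exact: (key _ h1).
  have b2 : x 0 j + eps / 3 * d 0 j != 0.
    by apply/eqP => h; have := two_zero dj b1 h; lra.
  have b3 : x 0 j + eps / 4 * d 0 j != 0.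
    by apply/eqP => h; have := two_zero dj b1 h; lra.
  have [a2|a2] := eqVneq (x 0 i + eps / 3 * d 0 i) 0; last exact: (key _ h2).
  have a3 : x 0 i + eps / 4 * d 0 i != 0.
    by apply/eqP => h; have := two_zero di a2 h; lra.
  exact: (key _ h3).
rewrite -qformE qform_clique // sd expr0n /= sub0r.
set N2 := \sum_i d 0 i ^+ 2.
have [k dk] : exists k, d 0 k != 0.
  apply/existsP; apply: contraNT d0 => /existsPn Hk.
  by apply/eqP/rowP => k; rewrite mxE; apply/eqP; move: (Hk k); rewrite negbK.
have N2p : 0 < N2.
  rewrite /N2 (bigD1 k) //=; apply: ltr_pwDl; first by rewrite lt_neqAle sqr_ge0 andbT eq_sym sqrf_eq0.
  by apply: sumr_ge0 => i _; exact: sqr_ge0.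
set s := euclid_norm d.
have s2 : s ^+ 2 = N2 by rewrite /s euclid_sq.
have sp : 0 < s by rewrite /s /euclid_norm sqrtr_gt0.
set v := s^-1 *: d.
have dv : d = s *: v by rewrite /v scalerA mulfV ?scale1r // gt_eqF.
have v1 : \sum_i v 0 i ^+ 2 = 1.
  under eq_bigr => i _ do rewrite /v mxE exprMn.
  by rewrite -mulr_sumr -/N2 -s2 exprVn mulVf // expf_neq0 // gt_eqF.
have ev1 : euclid_norm v = 1 by rewrite /euclid_norm v1 sqrtr1.
have bv : bil H v v < 2.
  rewrite bil_trmx bil_row.
  apply: le_lt_trans (cs _ v1) _.
  apply: le_lt_trans (le_spec H ev1) _.
  exact: specH.
have : bil H d d < 2 * N2.
  rewrite dv bilZ -s2.
  have s2p : 0 < s ^+ 2 by rewrite exprn_gt0.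
  nra.
lra.
Qed.
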